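(* Let $n\in\{24,32,40\}$ and let $C$ be an extremal Type~II $\mathbb{Z}_4$-code of length $n$. Let $v\in\mathbb{F}_2^n$ be a vector of weight $4$ such that $v\notin C^{(1)}$ and the binary code $\langle C^{(1)},v\rangle$ is doubly even. Then there is an extremal Type~II $\mathbb{Z}_4$-code $C'$ of length $n$ with $C'^{(1)}=\langle C^{(1)},v\rangle$.
   Context: A $\mathbb{Z}_4$-code of length $n$ is a $\mathbb{Z}_4$-submodule of $\mathbb{Z}_4^n$; it is self-dual if it equals its dual with respect to $x\cdot y=\sum x_iy_i \pmod 4$. The Euclidean weight of $x$ is $n_1(x)+4n_2(x)+n_3(x)$, $n_\alpha(x)$ being the number of coordinates equal to $\alpha$. A Type~II $\mathbb{Z}_4$-code is a self-dual code all of whose codewords have Euclidean weight divisible by $8$; it is extremal if its minimum Euclidean weight equals $8\lfloor n/24\rfloor+8$. The residue code is $C^{(1)}=\{c\bmod 2: c\in C\}$. For a binary code $B$ and vector $v$, $\langle B,v\rangle$ is the binary code generated by $B$ and $v$. A binary code is doubly even if all its codeword weights are divisible by $4$. *)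

(* Defs.v *)
From HB Require Import structures.
From mathcomp Require Import all_boot all_order all_algebra.
Set Implicit Arguments. Unset Strict Implicit. Unset Printing Implicit Defensive.
Import GRing.Theory.
Local Open Scope ring_scope.

Notation Z4 := 'Z_4.
Notation F2 := 'F_2.

Definition is_z4code (n : nat) (C : {set 'rV[Z4]_n}) : Prop :=
  (0 \in C) /\ (forall x y, x \in C -> y \in C -> x + y \in C) /\
  (forall (a : Z4) x, x \in C -> a *: x \in C).

Definition dotZ4 (n : nat) (x y : 'rV[Z4]_n) : Z4 := \sum_(i < n) x 0 i * y 0 i.

Definition dual_code (n : nat) (C : {set 'rV[Z4]_n}) : {set 'rV[Z4]_n} :=
  [set x | [forall y in C, dotZ4 x y == 0]].

Definition self_dual (n : nat) (C : {set 'rV[Z4]_n}) : Prop :=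
  is_z4code C /\ C = dual_code C.

Definition n_alpha (n : nat) (a : Z4) (x : 'rV[Z4]_n) : nat :=
  #|[set i : 'I_n | x 0 i == a]|.

Definition z4_1 : Z4 := 1.
Definition z4_2 : Z4 := 2%:R.
Definition z4_3 : Z4 := 3%:R.

Definition euclid_wt (n : nat) (x : 'rV[Z4]_n) : nat :=
  (n_alpha z4_1 x + 4 * n_alpha z4_2 x + n_alpha z4_3 x)%N.

Definition typeII (n : nat) (C : {set 'rV[Z4]_n}) : Prop :=
  self_dual C /\ (forall x, x \in C -> (8 %| euclid_wt x)%N).

Definition extremal_typeII (n : nat) (C : {set 'rV[Z4]_n}) : Prop :=
  typeII C /\
  (forall x, x \in C -> x != 0 -> (8 * (n %/ 24) + 8 <= euclid_wt x)%N) /\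
  (exists2 x, x \in C & (x != 0) /\ euclid_wt x = (8 * (n %/ 24) + 8)%N).

Definition red2 (a : Z4) : F2 := ((a : nat) %% 2)%:R.

Definition residue (n : nat) (C : {set 'rV[Z4]_n}) : {set 'rV[F2]_n} :=
  [set map_mx red2 x | x in C].

Definition is_binary_code (n : nat) (B : {set 'rV[F2]_n}) : Prop :=
  (0 \in B) /\ (forall x y, x \in B -> y \in B -> x + y \in B).

Definition gen_code (n : nat) (B : {set 'rV[F2]_n}) (v : 'rV[F2]_n) : {set 'rV[F2]_n} :=
  \bigcap_(D : {set 'rV[F2]_n} | [&& (0 \in D),
        [forall x in D, forall y in D, x + y \in D],
        B \subset D & v \in D]) D.

Definition bwt (n : nat) (v : 'rV[F2]_n) : nat := #|[set i : 'I_n | v 0 i != 0]|.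

Definition doubly_even (n : nat) (B : {set 'rV[F2]_n}) : Prop :=
  forall x, x \in B -> (4 %| bwt x)%N.

(* Main.v *)
Require Import Defs.
From HB Require Import structures.
From mathcomp Require Import all_boot all_order all_algebra zify.
Set Implicit Arguments. Unset Strict Implicit. Unset Printing Implicit Defensive.
Import GRing.Theory.
Local Open Scope ring_scope.
Lemma Z4_ind (P : Z4 -> Prop) : P 0 -> P 1 -> P 2%:R -> P 3%:R -> forall a, P a.
Proof.
move=> H0 H1 H2 H3 [m Hm].
case: m Hm => [|[|[|[|m]]]] Hm.
- by have -> : Ordinal Hm = 0 by apply/val_inj.
- by have -> : Ordinal Hm = 1 by apply/val_inj.
- by have -> : Ordinal Hm = 2%:R by apply/val_inj.
- by have -> : Ordinal Hm = 3%:R by apply/val_inj.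
- by [].
Qed.
Lemma F2_ind (P : F2 -> Prop) : P 0 -> P 1 -> forall a, P a.
Proof.
move=> H0 H1 [m Hm].
case: m Hm => [|[|m]] Hm.
- by have -> : Ordinal Hm = 0 by apply/val_inj.
- by have -> : Ordinal Hm = 1 by apply/val_inj.
- by [].
Qed.
Ltac bf := apply/eqP; vm_compute; reflexivity.
Ltac bfb := vm_compute; reflexivity.

Definition l1 (b : F2) : Z4 := (val b)%:R.
Definition ew (a : Z4) : nat := ((a == z4_1) + 4 * (a == z4_2) + (a == z4_3))%N.
Definition halfz (a : Z4) : F2 := (a == z4_2)%:R.

Lemma red2D (a b : Z4) : red2 (a + b) = red2 a + red2 b.
Proof. by elim/Z4_ind: a; elim/Z4_ind: b; bf. Qed.
Lemma red2M (a b : Z4) : red2 (a * b) = red2 a * red2 b.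
Proof. by elim/Z4_ind: a; elim/Z4_ind: b; bf. Qed.
Lemma red20 : red2 0 = 0. Proof. bf. Qed.
Lemma red2_l1 (c : F2) : red2 (l1 c) = c.
Proof. by elim/F2_ind: c; bf. Qed.
Lemma ew_l1 (c : F2) : ew (l1 c) = (c != 0).
Proof. by elim/F2_ind: c; bf. Qed.
Lemma ew_2l1 (c : F2) : ew (l1 c + l1 c) = (4 * (c != 0%R))%N.
Proof. by elim/F2_ind: c; bf. Qed.
Lemma l1sq (c : F2) : l1 c * l1 c = ((c != 0) : nat)%:R.
Proof. by elim/F2_ind: c; bf. Qed.
Lemma ewD_mod (a b : Z4) : ew (a + b) = (ew a + ew b + 2 * val (a * b)%R)%N %[mod 8].
Proof. by elim/Z4_ind: a; elim/Z4_ind: b; bf. Qed.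
Lemma ew_pm (a : Z4) (c : F2) : (ew (a + l1 c)%R + ew (a - l1 c)%R <= 2 * ew a + 2 * (c != 0%R))%N.
Proof. by elim/Z4_ind: a; elim/F2_ind: c; bfb. Qed.
Lemma red2_eq0b (a : Z4) : (red2 a == 0) ==> ((a == 0) || (a == z4_2)).
Proof. by elim/Z4_ind: a; bfb. Qed.
Lemma red2_eq0 (a : Z4) : red2 a = 0 -> (a == 0) || (a == z4_2).
Proof. by move=> H; have := red2_eq0b a; rewrite H eqxx. Qed.
Lemma red2_eq0Db (a : Z4) : (red2 a == 0) ==> (a + a == 0).
Proof. by elim/Z4_ind: a; bfb. Qed.
Lemma red2_eq0D (a : Z4) : red2 a = 0 -> a + a = 0.
Proof. by move=> H; have := red2_eq0Db a; rewrite H eqxx => /eqP. Qed.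
Lemma bwt_coord (c d : F2) : ((c + d != 0)%R + 2 * (c * d != 0)%R = (c != 0)%R + (d != 0)%R)%N.
Proof. by elim/F2_ind: c; elim/F2_ind: d; bf. Qed.
Lemma F2_nat (c : F2) : c = ((c != 0) : nat)%:R.
Proof. by elim/F2_ind: c; bf. Qed.
Lemma fix_lemmab (d t : Z4) : ((d == 0) || (d == z4_2)) ==> (red2 t == halfz d) ==> (d + (t + t) == 0).
Proof. by elim/Z4_ind: d; elim/Z4_ind: t; bfb. Qed.
Lemma fix_lemma (d t : Z4) : (d == 0) || (d == z4_2) -> red2 t = halfz d -> d + (t + t) = 0.
Proof. by move=> H1 H2; have := fix_lemmab d t; rewrite H1 H2 eqxx => /eqP. Qed.
Lemma halfzDb (a b : Z4) : ((a == 0) || (a == z4_2)) ==> ((b == 0) || (b == z4_2)) ==>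
  (halfz (a + b) == halfz a + halfz b).
Proof. by elim/Z4_ind: a; elim/Z4_ind: b; bfb. Qed.
Lemma halfzD (a b : Z4) : (a == 0) || (a == z4_2) -> (b == 0) || (b == z4_2) ->
  halfz (a + b) = halfz a + halfz b.
Proof. by move=> H1 H2; have := halfzDb a b; rewrite H1 H2 => /eqP. Qed.
Lemma F2_2 : (2%:R : F2) = 0. Proof. bf. Qed.
Lemma Z4_4 : (4%:R : Z4) = 0. Proof. bf. Qed.
Lemma Z4_natr (a : Z4) : (val a)%:R = a.
Proof. by elim/Z4_ind: a; bf. Qed.
Lemma red2N (a : Z4) : red2 (- a) = - red2 a.
Proof. by elim/Z4_ind: a; bf. Qed.
Lemma F2_double (c : F2) : c + c = 0.
Proof. by elim/F2_ind: c; bf. Qed.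
Lemma Z4_double_b (t : Z4) : (t + t == 0) ==> ((t == 0) || (t == z4_2)).
Proof. by elim/Z4_ind: t; bfb. Qed.
Lemma Z4_double (t : Z4) : t + t = 0 -> (t == 0) || (t == z4_2).
Proof. by move=> H; have := Z4_double_b t; rewrite H eqxx. Qed.
Lemma z22 : z4_2 + z4_2 = 0. Proof. bf. Qed.
Lemma Nz2 : - z4_2 = z4_2. Proof. bf. Qed.
Lemma z2_neq0 : z4_2 != 0. Proof. bfb. Qed.
Lemma val_z2 : val z4_2 = 2%N. Proof. by []. Qed.
Lemma ew0 : ew 0 = 0%N. Proof. by []. Qed.

Lemma card_sum n (P : pred 'I_n) : #|[set i | P i]| = (\sum_i P i)%N.
Proof.
rewrite -sum1_card big_mkcond /=; apply: eq_bigr => i _; rewrite inE; by case: (P i).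
Qed.

Lemma euclid_wtE n (x : 'rV[Z4]_n) : euclid_wt x = (\sum_i ew (x ord0 i))%N.
Proof.
rewrite /euclid_wt /n_alpha !card_sum big_distrr -!big_split; exact: eq_bigr.
Qed.

Lemma bwtE n (u : 'rV[F2]_n) : bwt u = (\sum_i (u ord0 i != (0%R:F2)))%N.
Proof. by rewrite /bwt card_sum. Qed.

Lemma Z4sum_val n (f : 'I_n -> Z4) : val (\sum_i f i) = ((\sum_i val (f i)) %% 4)%N.
Proof.
apply: (big_rec2 (fun (a : Z4) b => val a = b %% 4)%N) => // i a b _ H.
by rewrite -modnDmr -H.
Qed.

Definition liftv n (u : 'rV[F2]_n) : 'rV[Z4]_n := map_mx l1 u.
Notation res x := (map_mx red2 x).
Definition bdot n (u w : 'rV[F2]_n) : F2 := \sum_i u ord0 i * w ord0 i.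

Lemma dotDl n (x y z : 'rV[Z4]_n) : dotZ4 (x + y) z = dotZ4 x z + dotZ4 y z.
Proof. rewrite /dotZ4 -big_split; apply: eq_bigr => i _; by rewrite !mxE mulrDl. Qed.
Lemma dotC n (x y : 'rV[Z4]_n) : dotZ4 x y = dotZ4 y x.
Proof. apply: eq_bigr => i _; exact: mulrC. Qed.
Lemma dotDr n (x y z : 'rV[Z4]_n) : dotZ4 z (x + y) = dotZ4 z x + dotZ4 z y.
Proof. by rewrite dotC dotDl !(dotC z). Qed.
Lemma dotNl n (x y : 'rV[Z4]_n) : dotZ4 (- x) y = - dotZ4 x y.
Proof. rewrite /dotZ4 -sumrN; apply: eq_bigr => i _; by rewrite !mxE mulNr. Qed.
Lemma dotNr n (x y : 'rV[Z4]_n) : dotZ4 y (- x) = - dotZ4 y x.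
Proof. by rewrite dotC dotNl dotC. Qed.
Lemma dot0l n (x : 'rV[Z4]_n) : dotZ4 0 x = 0.
Proof. rewrite /dotZ4 big1 // => i _; by rewrite mxE mul0r. Qed.

Lemma resD n (x y : 'rV[Z4]_n) : res (x + y) = res x + res y.
Proof. apply/matrixP => i j; by rewrite !mxE red2D. Qed.
Lemma res0 n : res (0 : 'rV[Z4]_n) = 0.
Proof. apply/matrixP => i j; by rewrite !mxE red20. Qed.
Lemma res_lift n (u : 'rV[F2]_n) : res (liftv u) = u.
Proof. apply/matrixP => i j; by rewrite !mxE red2_l1 (ord1 i). Qed.
Lemma res_dot n (x y : 'rV[Z4]_n) : red2 (dotZ4 x y) = bdot (res x) (res y).
Proof.
rewrite /dotZ4 (big_morph red2 red2D red20); apply: eq_bigr => i _; by rewrite !mxE red2M.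
Qed.
Lemma res_double n (x : 'rV[Z4]_n) : res x = 0 -> x + x = 0.
Proof.
move=> H; apply/matrixP => i j; rewrite !mxE red2_eq0D //.
by have := congr1 (fun m : 'rV[F2]_n => m i j) H; rewrite !mxE.
Qed.

Lemma ew_lift n (u : 'rV[F2]_n) : euclid_wt (liftv u) = bwt u.
Proof. rewrite euclid_wtE bwtE; apply: eq_bigr => i _; by rewrite mxE ew_l1. Qed.
Lemma ew_2lift n (u : 'rV[F2]_n) : euclid_wt (liftv u + liftv u) = (4 * bwt u)%N.
Proof. rewrite euclid_wtE bwtE big_distrr; apply: eq_bigr => i _; by rewrite !mxE ew_2l1. Qed.
Lemma dot_lift n (u : 'rV[F2]_n) : dotZ4 (liftv u) (liftv u) = (bwt u)%:R.
Proof. rewrite /dotZ4 bwtE natr_sum; apply: eq_bigr => i _; by rewrite !mxE l1sq. Qed.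

Lemma ew_mod n (x y : 'rV[Z4]_n) :
  euclid_wt (x + y) = (euclid_wt x + euclid_wt y + 2 * val (dotZ4 x y))%N %[mod 8].
Proof.
rewrite !euclid_wtE Z4sum_val muln_modr (_ : (2 * 4 = 8)%N) // modnDmr.
rewrite -big_split big_distrr -big_split /=.
rewrite -[LHS]modn_summ -[RHS]modn_summ; congr (_ %% 8)%N; apply: eq_bigr => i _.
by rewrite !mxE ewD_mod.
Qed.

Lemma ew_pm_sum n (x : 'rV[Z4]_n) (u : 'rV[F2]_n) :
  (euclid_wt (x + liftv u) + euclid_wt (x - liftv u) <= 2 * euclid_wt x + 2 * bwt u)%N.
Proof.
rewrite !euclid_wtE bwtE -big_split !big_distrr -big_split /=.
apply: leq_sum => i _; by rewrite !mxE ew_pm.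
Qed.

Lemma bdot_even n (a b : 'rV[F2]_n) :
  (4 %| bwt a)%N -> (4 %| bwt b)%N -> (4 %| bwt (a + b))%N -> bdot a b = 0.
Proof.
move=> Ha Hb Hab.
have E : (bwt (a + b) + 2 * \sum_i ((a ord0 i * b ord0 i)%R != (0%R:F2)) = bwt a + bwt b)%N.
  rewrite !bwtE big_distrr -!big_split /=; apply: eq_bigr => i _; rewrite !mxE; move: (a ord0 i) (b ord0 i) => c d; by elim/F2_ind: c; elim/F2_ind: d; bf.
have H2 : (2 %| \sum_i ((a ord0 i * b ord0 i)%R != (0%R:F2)))%N.
  move: Ha Hb Hab E; set s := (\sum_i _)%N; set p := bwt a; set q := bwt b; set r := bwt _.
  move=> /dvdnP[k ->] /dvdnP[l ->] /dvdnP[m ->] E.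
  apply/dvdnP; exists (k + l - m)%N; lia.
rewrite /bdot (eq_bigr (fun i => (((a ord0 i * b ord0 i)%R != (0%R:F2)) : nat)%:R)); last by move=> i _; rewrite -F2_nat.
rewrite -natr_sum; case/dvdnP: H2 => k ->; by rewrite natrM F2_2 mulr0.
Qed.
Lemma resN n (x : 'rV[Z4]_n) : res (- x) = - res x.
Proof. apply/matrixP => i j; by rewrite !mxE red2N. Qed.
Lemma F2v_double n (u : 'rV[F2]_n) : u + u = 0.
Proof. apply/matrixP => i j; by rewrite !mxE F2_double. Qed.
Lemma bdotC n (u w : 'rV[F2]_n) : bdot u w = bdot w u.
Proof. apply: eq_bigr => i _; exact: mulrC. Qed.
Lemma euclid_wt0 n : euclid_wt (0 : 'rV[Z4]_n) = 0%N.
Proof. rewrite euclid_wtE big1 // => i _; by rewrite mxE. Qed.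
Lemma dot0r n (x : 'rV[Z4]_n) : dotZ4 x 0 = 0.
Proof. by rewrite dotC dot0l. Qed.
Lemma dotBl n (x y z : 'rV[Z4]_n) : dotZ4 (x - y) z = dotZ4 x z - dotZ4 y z.
Proof. by rewrite dotDl dotNl. Qed.
Lemma dotBr n (x y z : 'rV[Z4]_n) : dotZ4 z (x - y) = dotZ4 z x - dotZ4 z y.
Proof. by rewrite dotDr dotNr. Qed.

Lemma dualP n (C : {set 'rV[Z4]_n}) x :
  reflect (forall y, y \in C -> dotZ4 x y = 0) (x \in dual_code C).
Proof.
rewrite inE; apply: (iffP forall_inP) => H y yC; first by apply/eqP; apply: H.
by rewrite H.
Qed.

Lemma gen_sub n (B : {set 'rV[F2]_n}) v x : x \in B -> x \in gen_code B v.
Proof. move=> xB; apply/bigcapP => D /and4P[_ _ /subsetP sub _]; exact: sub. Qed.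
Lemma gen_v n (B : {set 'rV[F2]_n}) v : v \in gen_code B v.
Proof. by apply/bigcapP => D /and4P[_ _ _ ->]. Qed.
Lemma gen_add n (B : {set 'rV[F2]_n}) v x y :
  x \in gen_code B v -> y \in gen_code B v -> x + y \in gen_code B v.
Proof.
move=> /bigcapP Hx /bigcapP Hy; apply/bigcapP => D HD.
case/and4P: (HD) => _ /forall_inP Dadd _ _.
by have /forall_inP := Dadd _ (Hx D HD); apply; apply: Hy.
Qed.
Lemma arith1 k : ((4 + k * 8 + 2 * 2) %% 8 == 0)%N.
Proof. apply/eqP; lia. Qed.
Lemma arith2 a b k : (15 < b -> 15 < a -> a + b <= 2 * (k * 8) + 2 * 4 -> 15 < k * 8)%N.
Proof. lia. Qed.

Lemma extend_functional n (B : {set 'rV[F2]_n}) (h : 'rV[F2]_n -> F2) :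
  0 \in B -> (forall x y, x \in B -> y \in B -> x + y \in B) ->
  (forall x y, x \in B -> y \in B -> h (x + y) = h x + h y) ->
  exists w : 'rV[F2]_n, forall a, a \in B -> h a = bdot a w.
Proof.
move=> B0 BD hD.
have h0 : h 0 = 0.
  have := hD 0 0 B0 B0; rewrite addr0 => /(congr1 (fun t => t - h 0)).
  by rewrite subrr addrK => <-.
have hZ : forall (t : F2) a, a \in B -> t *: a \in B /\ h (t *: a) = t * h a.
  by move=> t a aB; elim/F2_ind: t; rewrite ?scale0r ?scale1r ?mul0r ?mul1r.
set s := enum B; set k := size s.
have sB : forall i : 'I_k, s`_i \in B.
  by move=> i; rewrite -mem_enum; apply: mem_nth.
pose M : 'M[F2]_(k, n) := \matrix_(i, j) (s`_i) 0 j.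
pose g : 'rV[F2]_k := \row_i h s`_i.
have Hg : (g <= M^T)%MS.
  rewrite submxE; apply/eqP/matrixP => r j; rewrite !mxE.
  set Z := cokermx M^T.
  have HZ : M^T *m Z = 0 := mulmx_coker _.
  have V0 : \sum_(i < k) Z i j *: s`_i = 0.
    apply/matrixP => r' c; rewrite summxE !mxE.
    transitivity ((M^T *m Z) c j); last by rewrite HZ mxE.
    rewrite !mxE; apply: eq_bigr => i _; by rewrite !mxE (ord1 r') mulrC.
  have K : (\sum_(i < k) Z i j *: s`_i) \in B /\
           h (\sum_(i < k) Z i j *: s`_i) = \sum_(i < k) Z i j * h s`_i.
    apply: (big_ind2 (fun x y => x \in B /\ h x = y)).
    - by rewrite h0.
    - by move=> x1 y1 x2 y2 [H1 <-] [H2 <-]; rewrite BD // hD.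
    - by move=> i _; apply: hZ.
  case: K => _; rewrite V0 h0 => E.
  rewrite [RHS]E; apply: eq_bigr => i _; by rewrite !mxE mulrC.
case/submxP: Hg => D HD.
exists D => a aB.
have ai : (index a s < k)%N by rewrite index_mem mem_enum.
have := congr1 (fun m : 'rV[F2]_k => m 0 (Ordinal ai)) HD; rewrite !mxE /= nth_index ?mem_enum // => ->.
rewrite /bdot; apply: eq_bigr => j _; by rewrite !mxE nth_index ?mem_enum // mulrC.
Qed.

Theorem mainTheorem3 (n : nat) (C : {set 'rV['Z_4]_n}) (v : 'rV['F_2]_n) :
  n \in [:: 24%N; 32%N; 40%N] ->
  extremal_typeII C ->
  bwt v = 4%N ->
  v \notin residue C ->
  doubly_even (gen_code (residue C) v) ->
  exists C' : {set 'rV['Z_4]_n},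
    extremal_typeII C' /\ residue C' = gen_code (residue C) v.
Proof.
move=> Hn [[[[C0 [CD CZ]] Cdual] C8] [Cmin _]] Hv vC1 Hde.
have b16 : (8 * (n %/ 24) + 8 = 16)%N.
  by move: Hn; rewrite !inE => /or3P[] /eqP ->.
rewrite b16 in Cmin *.
set vh := liftv v.
have resC : forall c, c \in C -> res c \in residue C by move=> c cC; apply: imset_f.
have CN : forall c, c \in C -> - c \in C by move=> c cC; rewrite -scaleN1r; apply: (CZ).
have inCd : forall x, (forall y, y \in C -> dotZ4 x y = 0) -> x \in C.
  by move=> x H; rewrite Cdual; apply/dualP.
have dotCC : forall x y, x \in C -> y \in C -> dotZ4 x y = 0.
  by move=> x y xC yC; move: xC; rewrite {1}Cdual => /dualP; apply.
have vv : dotZ4 vh vh = 0 by rewrite dot_lift Hv Z4_4.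
have F2r : forall c, c \in C -> red2 (dotZ4 vh c) = 0.
  move=> c cC; rewrite res_dot /vh res_lift; apply: bdot_even; rewrite ?Hv //.
    by apply: (Hde); apply: gen_sub; apply: (resC).
  by apply: (Hde); apply: gen_add; [apply: gen_v| apply: gen_sub; apply: (resC)].
have Fv : forall c, c \in C -> (dotZ4 vh c == 0) || (dotZ4 vh c == z4_2).
  by move=> c cC; apply: red2_eq0; apply: (F2r).
have [z zC [z0 zv]] : exists2 z, z \in C & res z = 0 /\ dotZ4 vh z = z4_2.
  case: (boolP [exists z in C, (res z == 0) && (dotZ4 vh z == z4_2)]).
    by case/exists_inP => z zC /andP[/eqP z0 /eqP zv]; exists z.
  move/exists_inPn => Hno; exfalso.
  have Hno' : forall c, c \in C -> res c = 0 -> dotZ4 vh c = 0.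
    move=> c cC c0; have := Hno c cC; rewrite c0 eqxx /=.
    by case/orP: (Fv c cC) => /eqP -> //; rewrite eqxx.
  have wd : forall c c', c \in C -> c' \in C -> res c = res c' -> dotZ4 vh c = dotZ4 vh c'.
    move=> c c' cC c'C e; apply/eqP; rewrite -subr_eq0 -dotBr; apply/eqP.
    by apply: (Hno'); [apply: (CD) => //; apply: (CN) | rewrite resD resN e subrr].
  pose h (a : 'rV[F2]_n) := if [pick c in C | res c == a] is Some c then halfz (dotZ4 vh c) else 0.
  have hspec : forall c, c \in C -> h (res c) = halfz (dotZ4 vh c).
    move=> c cC; rewrite /h; case: pickP => [c' /andP[c'C /eqP e] | H].
      by rewrite (wd c' c).
    by have := H c; rewrite cC eqxx.
  have [w Hw] : exists w : 'rV[F2]_n, forall a, a \in residue C -> h a = bdot a w.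
    apply: extend_functional.
    - by rewrite -(res0 n); apply: (resC).
    - move=> _ _ /imsetP[c cC ->] /imsetP[c' c'C ->]; rewrite -resD; apply: (resC); exact: (CD).
    - move=> _ _ /imsetP[c cC ->] /imsetP[c' c'C ->]; rewrite -resD !hspec //; last exact: (CD).
      by rewrite dotDr halfzD //; apply: (Fv).
  have yC : vh + (liftv w + liftv w) \in C.
    apply: (inCd) => c cC; rewrite !dotDl; apply: fix_lemma; first exact: (Fv).
    by rewrite res_dot res_lift bdotC -Hw ?hspec //; apply: (resC).
  move/negP: vC1; apply; have := resC _ yC.
  by rewrite !resD /vh !res_lift F2v_double addr0.
have vvC : vh + vh \in C.
  apply: (inCd) => c cC; rewrite dotDl; apply: red2_eq0D; exact: (F2r).
pose C' := [set x | ((x \in C) && (dotZ4 vh x == 0)) ||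
                    ((x - vh \in C) && (dotZ4 vh (x - vh) == z4_2))].
have in1 : forall c, c \in C -> dotZ4 vh c = 0 -> c \in C'.
  by move=> c cC e; rewrite inE cC e eqxx.
have in2 : forall c, c \in C -> dotZ4 vh c = z4_2 -> vh + c \in C'.
  by move=> c cC e; rewrite inE addrC addrK cC e eqxx orbT.
have caseC : forall x, x \in C' -> (x \in C /\ dotZ4 vh x = 0) \/
                  exists2 c, c \in C & dotZ4 vh c = z4_2 /\ x = vh + c.
  move=> x; rewrite inE => /orP[/andP[xC /eqP e]|/andP[xC /eqP e]]; first by left.
  by right; exists (x - vh) => //; split => //; rewrite addrC subrK.
have C'D : forall x y, x \in C' -> y \in C' -> x + y \in C'.
  move=> x y /caseC[[xC ex]|[c cC [ec ->]]] /caseC[[yC ey]|[c' c'C [ec' ->]]].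
  - by apply: (in1); [apply: (CD) | rewrite dotDr ex ey addr0].
  - rewrite addrCA; apply: (in2); [apply: (CD) | rewrite dotDr ex ec' add0r] => //.
  - rewrite -addrA; apply: (in2); [apply: (CD) | rewrite dotDr ey ec addr0] => //.
  - rewrite addrACA; apply: (in1); first by apply: (CD) => //; apply: (CD).
    by rewrite !dotDr vv ec ec' z22 !addr0.
have C'0 : 0 \in C' by apply: (in1) => //; rewrite dotC dot0l.
have C'Z : forall (a : Z4) x, x \in C' -> a *: x \in C'.
  move=> a x xC; rewrite -(Z4_natr a) scaler_nat.
  elim: (val a) => [|m IH]; first by rewrite mulr0n.
  by rewrite mulrS; apply: (C'D).
have C'dual : C' = dual_code C'.
  apply/setP => x; apply/idP/idP.
    move=> xC'; apply/dualP => y yC'.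
    move: xC' yC' => /caseC[[xC ex]|[c cC [ec ->]]] /caseC[[yC ey]|[c' c'C [ec' ->]]].
    - exact: dotCC.
    - by rewrite dotDr dotC ex add0r dotCC.
    - by rewrite dotDl ey add0r dotCC.
    - by rewrite !dotDl !dotDr vv ec' (dotC c vh) ec (dotCC c c') // add0r addr0 z22.
  move/dualP => Hx.
  have xz : dotZ4 x z + dotZ4 x z = 0 by rewrite -dotDr res_double // dot0r.
  have xvz : dotZ4 x (vh + z) = 0 by apply: (Hx); apply: (in2).
  have xD : forall c, c \in C -> dotZ4 vh c = 0 -> dotZ4 x c = 0 by move=> c cC e; apply: (Hx); apply: (in1).
  have xnD : forall c, c \in C -> dotZ4 vh c = z4_2 -> dotZ4 x c = - dotZ4 x z.
    move=> c cC e; apply/eqP; rewrite -subr_eq0 opprK -dotDr; apply/eqP; apply: (xD); first exact: (CD).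
    by rewrite dotDr e zv z22.
  case/orP: (Z4_double xz) => /eqP exz.
    apply: (in1).
      apply: (inCd) => c cC; case/orP: (Fv c cC) => /eqP e; first exact: (xD).
      by rewrite xnD // exz oppr0.
    by rewrite dotC; move: xvz; rewrite dotDr exz addr0.
  rewrite -(subrK vh x) addrC; apply: (in2).
    apply: (inCd) => c cC; rewrite dotBl; case/orP: (Fv c cC) => /eqP e.
      by rewrite xD // e subrr.
    by rewrite xnD // exz e Nz2 z22.
  rewrite dotBr vv subr0 dotC; move: xvz; rewrite dotDr exz => /eqP.
  by rewrite addr_eq0 Nz2 => /eqP.
exists C'; split; last first.
  apply/eqP; rewrite eqEsubset; apply/andP; split.
    apply/subsetP => _ /imsetP[x xC' ->].
    case/caseC: xC' => [[xC _]|[c cC [_ ->]]].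
      by apply: gen_sub; apply: (resC).
    by rewrite resD /vh res_lift; apply: gen_add; [apply: gen_v | apply: gen_sub; apply: (resC)].
  apply: bigcap_inf; apply/and4P; split.
  - by rewrite -(res0 n); apply: imset_f.
  - apply/forall_inP => _ /imsetP[x xC' ->]; apply/forall_inP => _ /imsetP[y yC' ->].
    by rewrite -resD; apply: imset_f; apply: (C'D).
  - apply/subsetP => _ /imsetP[c cC ->].
    case/orP: (Fv c cC) => /eqP e; first by apply: imset_f; apply: (in1).
    have -> : res c = res (c + z) by rewrite resD z0 addr0.
    by apply: imset_f; apply: (in1); [apply: (CD) | rewrite dotDr e zv z22].
  - have -> : v = res (vh + z) by rewrite resD z0 addr0 /vh res_lift.
    by apply: imset_f; apply: (in2).
have C'8 : forall x, x \in C' -> (8 %| euclid_wt x)%N.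
  move=> x /caseC[[xC _]|[c cC [ec ->]]]; first exact: C8.
  rewrite /dvdn ew_mod ec val_z2 /vh ew_lift Hv.
  case/dvdnP: (C8 c cC) => k ->; exact: arith1.
split; [split; [split=> //|] | split].
- exact: C'8.
- rewrite b16 => x xC'; have := C'8 _ xC'; move: xC'.
  move=> /caseC[[xC _]|[c cC [ec ->]]] H8 xn0; first exact: (Cmin).
  have c0 : c != 0 by apply/eqP => c0; move: ec; rewrite c0 dot0r => /eqP; rewrite eq_sym (negbTE z2_neq0).
  have E1 : (16 <= euclid_wt (vh + c - vh))%N.
    by rewrite addrC addKr; apply: (Cmin).
  have vvcC : vh + vh + c \in C by apply: (CD).
  have vvc0 : vh + vh + c != 0.
    apply/eqP => e; have := congr1 (dotZ4 vh) e; rewrite dot0r !dotDr vv ec add0r.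
    by move/eqP; rewrite add0r (negbTE z2_neq0).
  have E2 : (16 <= euclid_wt (vh + c + vh))%N.
    by rewrite addrAC; apply: (Cmin).
  have := ew_pm_sum (vh + c) v; rewrite -/vh Hv.
  case/dvdnP: H8 => k Hk; rewrite Hk in E1 E2 *.
  move=> H; move: E1 E2 H; move: (euclid_wt (vh + c + vh)) (euclid_wt (vh + c - vh)) => a b; exact: arith2.
- exists (vh + vh).
    by apply: (in1) => //; rewrite dotDr vv addr0.
  split; last by rewrite ew_2lift Hv b16.
  apply/eqP => e; have := ew_2lift v; rewrite -/vh e euclid_wt0 Hv //.
Qed.
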